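(* Let $u\colon\mathcal{A}\times\mathbb{R}\to\mathbb{R}$ be a utility function which is strictly decreasing in the payment $z$ for each fixed alternative. Then: (1) The preference represented by $u$ is represented by some quasi-linear utility function if and only if there exist a function $v\colon\mathcal{A}\to\mathbb{R}$ and a strictly increasing function $\varphi\colon\mathbb{R}\to\mathbb{R}$ such that $u(a,z)=\varphi(v(a)-z)$ for all $a\in\mathcal{A}$, $z\in\mathbb{R}$. (2) The preference represented by $u$ is pos-represented by some quasi-linear utility function if and only if there exist a function $v\colon\mathcal{A}\to\mathbb{R}$ and a strictly increasing function $\varphi\colon\mathbb{R}\to\mathbb{R}$ such that $u(a,z)=\varphi(v(a)-z)$ for all $a\in\mathcal{A}$ and all $z\leqslant v(a)$.
   Context: $\mathcal{A}$ is a finite set of alternatives. A preference is a complete, transitive binary relation $\succcurlyeq$ on $\mathcal{A}\times\mathbb{R}$, where $(a,z)$ means alternative $a$ is chosen and the agent pays $z$. A function $u$ represents $\succcurlyeq$ if for all $a,b\in\mathcal{A}$, $z_a,z_b\in\mathbb{R}$: $(a,z_a)\succcurlyeq(b,z_b)\iff u(a,z_a)\geqslant u(b,z_b)$. A function $u$ pos-represents $\succcurlyeq$ if this equivalence holds for all $a,b,z_a,z_b$ with $u(a,z_a)\geqslant0$ or $u(b,z_b)\geqslant0$. A utility function is quasi-linear if $u(a,z)=v(a)-z$ for some $v\colon\mathcal{A}\to\mathbb{R}$. *)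

(* Defs.v *)
From mathcomp Require Import ssreflect ssrfun ssrbool eqtype fintype.
From Stdlib Require Import Reals.
Open Scope R_scope.

(* A preference is a (complete, transitive) binary relation on A x R;
   (a, z): alternative a chosen, agent pays z. *)
Definition preference (A : Type) := (A * R) -> (A * R) -> Prop.

Definition pref_of {A : Type} (u : A -> R -> R) : preference A :=
  fun x y => u (fst x) (snd x) >= u (fst y) (snd y).

Definition represents {A : Type} (w : A -> R -> R) (p : preference A) : Prop :=
  forall (a b : A) (za zb : R), p (a, za) (b, zb) <-> w a za >= w b zb.

Definition pos_represents {A : Type} (w : A -> R -> R) (p : preference A) : Prop :=
  forall (a b : A) (za zb : R), (w a za >= 0 \/ w b zb >= 0) ->
    (p (a, za) (b, zb) <-> w a za >= w b zb).

Definition quasi_linear {A : Type} (w : A -> R -> R) : Prop :=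
  exists v : A -> R, forall a z, w a z = v a - z.

Definition strictly_increasing (f : R -> R) : Prop :=
  forall x y, x < y -> f x < f y.

Definition strictly_decreasing_in_payment {A : Type} (u : A -> R -> R) : Prop :=
  forall a z1 z2, z1 < z2 -> u a z2 < u a z1.

(* Main.v *)
Require Import Defs.
From mathcomp Require Import ssreflect ssrfun ssrbool eqtype fintype.
From Stdlib Require Import Reals Lra.
Open Scope R_scope.

Theorem theorem4 (A : finType) (u : A -> R -> R)
  (hu : strictly_decreasing_in_payment u) :
  ((exists w : A -> R -> R, quasi_linear w /\ represents w (pref_of u)) <->
     (exists (v : A -> R) (phi : R -> R), strictly_increasing phi /\
        forall (a : A) (z : R), u a z = phi (v a - z)))
  /\
  ((exists w : A -> R -> R, quasi_linear w /\ pos_represents w (pref_of u)) <->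
     (exists (v : A -> R) (phi : R -> R), strictly_increasing phi /\
        forall (a : A) (z : R), z <= v a -> u a z = phi (v a - z))).
Proof.
  unfold strictly_decreasing_in_payment in hu.
  split; split.
  - intros [w [[v Hv] Hrep]].
    assert (key : forall a b za zb, u a za >= u b zb <-> v a - za >= v b - zb).
    { intros a b za zb. rewrite -Hv -(Hv b). exact (Hrep a b za zb). }
    case: (pickP (fun _ : A => true)) => [a0 _|H0].
    + exists v, (fun t => u a0 (v a0 - t)). split.
      * intros x y Hxy. apply hu. lra.
      * intros a z.
        have H1 := proj2 (key a a0 z (v a0 - (v a - z))).
        have H2 := proj2 (key a0 a (v a0 - (v a - z)) z).
        apply Rge_antisym; [apply H1 | apply H2]; lra.
    + exists v, (fun t => t). split.
      * intros x y Hxy; exact Hxy.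
      * intros a; have := H0 a; discriminate.
  - intros [v [phi [Hphi Hu]]].
    exists (fun a z => v a - z). split.
    + exists v; reflexivity.
    + intros a b za zb. unfold pref_of; simpl. rewrite !Hu. split.
      * intros H. destruct (Rge_gt_dec (v a - za) (v b - zb)) as [h|h]; auto.
        have := Hphi _ _ h. lra.
      * intros H. destruct (Req_dec (v a - za) (v b - zb)) as [h|h].
        -- rewrite h; lra.
        -- have := Hphi (v b - zb) (v a - za) ltac:(lra). lra.
  - intros [w [[v Hv] Hrep]].
    assert (key : forall a b za zb, (v a - za >= 0 \/ v b - zb >= 0) ->
               (u a za >= u b zb <-> v a - za >= v b - zb)).
    { intros a b za zb Hd. rewrite -Hv -(Hv b). apply (Hrep a b za zb).
      rewrite !Hv. exact Hd. }
    case: (pickP (fun _ : A => true)) => [a0 _|H0].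
    + exists v, (fun t => if Rle_dec 0 t then u a0 (v a0 - t) else u a0 (v a0) + t).
      split.
      * intros x y Hxy. cbv beta.
        destruct (Rle_dec 0 x), (Rle_dec 0 y); cbn [is_left]; try lra.
        -- apply hu. lra.
        -- destruct (Req_dec y 0) as [e|e].
           ++ subst y. rewrite Rminus_0_r. lra.
           ++ have := hu a0 (v a0 - y) (v a0) ltac:(lra). lra.
      * intros a z Hz. cbv beta.
        destruct (Rle_dec 0 (v a - z)); cbn [is_left]; [|lra].
        have H1 := proj2 (key a a0 z (v a0 - (v a - z)) ltac:(left; lra)).
        have H2 := proj2 (key a0 a (v a0 - (v a - z)) z ltac:(right; lra)).
        apply Rge_antisym; [apply H1 | apply H2]; lra.
    + exists v, (fun t => t). split.
      * intros x y Hxy; exact Hxy.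
      * intros a; have := H0 a; discriminate.
  - intros [v [phi [Hphi Hu]]].
    exists (fun a z => v a - z). split.
    + exists v; reflexivity.
    + intros a b za zb Hd. unfold pref_of; simpl.
      assert (mono : forall s t, 0 <= s -> 0 <= t -> s <= t -> phi s <= phi t).
      { intros s t _ _ hst. destruct (Req_dec s t) as [e|e].
        - rewrite e; lra.
        - have := Hphi s t ltac:(lra). lra. }
      destruct (Rle_dec za (v a)) as [ha|ha], (Rle_dec zb (v b)) as [hb|hb].
      * rewrite !Hu //. split.
        -- intros H. destruct (Rge_gt_dec (v a - za) (v b - zb)) as [h|h]; auto.
           have := Hphi _ _ h. lra.
        -- intros H. have := mono (v b - zb) (v a - za) ltac:(lra) ltac:(lra) ltac:(lra). lra.
      * rewrite (Hu a za ha). split; [lra|]. intros _.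
        have := hu b (v b) zb ltac:(lra).
        rewrite (Hu b (v b) (Rle_refl _)). rewrite Rminus_diag.
        have := mono 0 (v a - za) ltac:(lra) ltac:(lra) ltac:(lra). lra.
      * rewrite (Hu b zb hb). split; [|lra]. intros H; exfalso.
        have := hu a (v a) za ltac:(lra).
        rewrite (Hu a (v a) (Rle_refl _)). rewrite Rminus_diag.
        have := mono 0 (v b - zb) ltac:(lra) ltac:(lra) ltac:(lra). lra.
      * exfalso; destruct Hd; lra.
Qed.
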